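(* Let $N_\nu=2^{n_\nu}$ with $n_\nu\ge1$, let $\mathbf{g}=(g_0,\ldots,g_m)$ with $g_0=1$, $m\ge 1$, and let $\mathbf{s}\in\mathrm{GF}(2)^m$. Let $\boldsymbol{\eta}$ be the output of $\mathrm{convTrans}(\mathbf{0},\mathbf{g},\mathbf{s})$ and $\boldsymbol{\eta}_c=\boldsymbol{\eta}\mathbf{F}^{\otimes n_\nu}$. Then $$\{\mathbf{u}(\mathbf{v})\mathbf{F}^{\otimes n_\nu} : \mathbf{v}\in\mathrm{GF}(2)^{N_\nu},\ v_0=0\}=\{\mathbf{c}+\boldsymbol{\eta}_c : \mathbf{c}\in\mathrm{GF}(2)^{N_\nu},\ \textstyle\sum_{j=0}^{N_\nu-1}c_j=0\},$$ where $\mathbf{u}(\mathbf{v})$ is the output of $\mathrm{convTrans}(\mathbf{v},\mathbf{g},\mathbf{s})$; i.e., the set of possible node outputs is a coset of the single parity check code shifted by $\boldsymbol{\eta}_c$.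
   Context: All arithmetic is over $\mathrm{GF}(2)$. $\mathbf{F}=\begin{bmatrix}1&0\\1&1\end{bmatrix}$ and $\mathbf{F}^{\otimes n}$ is its $n$-fold Kronecker power. The function $\mathrm{convTrans}(\mathbf{v},\mathbf{g},\mathbf{s})$ processes $v_0,\ldots,v_{N-1}$ in order starting from state $\mathbf{s}=(s_0,\ldots,s_{m-1})$: for input bit $v$ and current state $\mathbf{s}$ it outputs $u=g_0v+\sum_{i=1}^m g_i s_{i-1}$ and moves to the state $(v,s_0,\ldots,s_{m-2})$; it returns $\mathbf{u}=(u_0,\ldots,u_{N-1})$ and the final state. *)

(* Defs.v *)
From HB Require Import structures.
From mathcomp Require Import all_boot all_order all_algebra.
Set Implicit Arguments. Unset Strict Implicit. Unset Printing Implicit Defensive.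
Import Order.TTheory GRing.Theory.
Local Open Scope ring_scope.

(* Entry of a matrix at natural-number indices (0 outside the range). *)
Definition mx_at (R : nmodType) m n (A : 'M[R]_(m, n)) (i j : nat) : R :=
  match @insub _ (fun k => k < m)%N 'I_m i, @insub _ (fun k => k < n)%N 'I_n j with
  | Some i', Some j' => A i' j'
  | _, _ => 0
  end.

Definition kron (R : pzRingType) m1 n1 m2 n2 (A : 'M[R]_(m1, n1)) (B : 'M[R]_(m2, n2))
  : 'M[R]_(m1 * m2, n1 * n2) :=
  \matrix_(i, j) (mx_at A (i %/ m2) (j %/ n2) * mx_at B (i %% m2) (j %% n2)).

Definition Fker : 'M['F_2]_2 := \matrix_(i < 2, j < 2) (if (j <= i)%N then 1 else 0).

Fixpoint Fpow (n : nat) : 'M['F_2]_(2 ^ n) :=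
  match n with
  | 0 => 1%:M
  | n'.+1 => castmx (esym (expnS 2 n'), esym (expnS 2 n')) (kron Fker (Fpow n'))
  end.

(* convTrans(v, g, s): g = (g_0,...,g_m) as a sequence of length m+1,
   state s = (s_0,...,s_{m-1}) as a sequence of length m.  For input bit x and
   state s it outputs g_0 x + sum_{i=1}^m g_i s_{i-1} and moves to the state
   (x, s_0, ..., s_{m-2}) = belast x s. *)
Fixpoint convTrans (g v s : seq 'F_2) : seq 'F_2 * seq 'F_2 :=
  match v with
  | [::] => ([::], s)
  | x :: v' =>
      let u := nth 0 g 0 * x + \sum_(i < size s) nth 0 g i.+1 * nth 0 s i in
      let r := convTrans g v' (belast x s) in
      (u :: r.1, r.2)
  end.

Definition rv2seq N (v : 'rV['F_2]_N) : seq 'F_2 := [seq v 0 j | j <- enum 'I_N].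
Definition seq2rv N (s : seq 'F_2) : 'rV['F_2]_N := \row_(j < N) nth 0 s j.

Definition convOut N (g s : seq 'F_2) (v : 'rV['F_2]_N) : 'rV['F_2]_N :=
  seq2rv N (convTrans g (rv2seq v) s).1.

Lemma pow2_gt0 n : (0 < 2 ^ n)%N.
Proof. by rewrite expn_gt0. Qed.

Definition idx0 n : 'I_(2 ^ n) := Ordinal (pow2_gt0 n).

(* Main.v *)
Require Import Defs.
From mathcomp Require Import all_boot all_order all_algebra zify.
Import GRing.Theory.
Local Open Scope ring_scope.

Lemma mx_atE (R : nmodType) m n (A : 'M[R]_(m, n)) (i : 'I_m) (j : 'I_n) :
  mx_at A i j = A i j.
Proof. by rewrite /mx_at !valK. Qed.

Lemma mx_at_outl (R : nmodType) m n (A : 'M[R]_(m, n)) i j :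
  (m <= i)%N -> mx_at A i j = 0.
Proof. by move=> h; rewrite /mx_at insubF // ltnNge h. Qed.

Lemma mx_at_outr (R : nmodType) m n (A : 'M[R]_(m, n)) i j :
  (n <= j)%N -> mx_at A i j = 0.
Proof.
move=> h; rewrite /mx_at (insubF 'I_n (_ : (j < n)%N = false)) ?ltnNge ?h //.
by case: insub.
Qed.

Lemma sum_split (f : nat -> 'F_2) a N :
  \sum_(0 <= k < a * N) f k = \sum_(0 <= x < a) \sum_(0 <= y < N) f (x * N + y)%N.
Proof.
elim: a => [|a IH]; first by rewrite mul0n !big_geq.
rewrite big_nat_recr //= -IH mulSnr (big_cat_nat _ (leq_addr _ _)) //=.
congr (_ + _).

rewrite -{1}(add0n (a * N)%N) big_addn addKn.

by apply: eq_bigr => y _; rewrite addnC.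
Qed.

Lemma fkE x y : mx_at Fker x y = ((x < 2) && (y <= x))%N%:R :> 'F_2.
Proof.
case: (ltnP x 2) => hx; last by rewrite (@mx_at_outl _ 2 2).
case: (ltnP y 2) => hy; last first.
  by rewrite (@mx_at_outr _ 2 2) // leqNgt (leq_trans hx hy) andbF.
rewrite (@mx_atE _ 2 2 Fker (Ordinal hx) (Ordinal hy)) mxE /=; by case: leqP.
Qed.

Lemma sum_split' (f : nat -> 'F_2) a N B : B = (a * N)%N ->
  \sum_(0 <= k < B) f k = \sum_(0 <= x < a) \sum_(0 <= y < N) f (x * N + y)%N.
Proof. by move->; apply: sum_split. Qed.

Lemma fk_sq x y : \sum_(0 <= a < 2) mx_at Fker x a * mx_at Fker a y
  = ((x == y) && (x < 2))%N%:R.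
Proof.
rewrite !big_nat_recl // big_geq // addr0 !fkE.
case: x => [|[|x]]; case: y => [|[|y]] => /=;
  rewrite ?(mul1r,mul0r,mulr0,mulr1,addr0,add0r) ?andbF //; by apply/eqP.
Qed.

Lemma fk_rs x : \sum_(0 <= a < 2) mx_at Fker x a = (x == 0)%N%:R.
Proof.
rewrite !big_nat_recl // big_geq // addr0 !fkE.
case: x => [|[|x]] => /=;
  rewrite ?(mul1r,mul0r,mulr0,mulr1,addr0,add0r) ?andbF //; by apply/eqP.
Qed.

Lemma divlt2 n i : (i %/ 2 ^ n < 2)%N = (i < 2 ^ n.+1)%N.
Proof. by rewrite ltn_divLR ?expn_gt0 // expnS mulnC. Qed.

Lemma fpS n i j : mx_at (Fpow n.+1) i j =
  mx_at Fker (i %/ 2 ^ n) (j %/ 2 ^ n) * mx_at (Fpow n) (i %% 2 ^ n) (j %% 2 ^ n).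
Proof.
case: (ltnP i (2 ^ n.+1)) => hi; last first.
  by rewrite mx_at_outl // fkE divlt2 ltnNge hi /= mul0r.
case: (ltnP j (2 ^ n.+1)) => hj; last first.
  rewrite mx_at_outr // fkE divlt2 hi /=.
  have : (2 <= j %/ 2 ^ n)%N by rewrite leqNgt divlt2 -leqNgt.
  have : (i %/ 2 ^ n < 2)%N by rewrite divlt2.
  by move=> a b; rewrite leqNgt (leq_trans a b) mul0r.
rewrite (@mx_atE _ _ _ (Fpow n.+1) (Ordinal hi) (Ordinal hj)) /= castmxE mxE /=.
done.
Qed.

Lemma fp0 i j : mx_at (Fpow 0) i j = ((i == 0) && (j == 0))%N%:R.
Proof.
case: i => [|i]; last by rewrite mx_at_outl.
case: j => [|j]; last by rewrite mx_at_outr.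
by rewrite (@mx_atE _ 1 1 (Fpow 0) ord0 ord0) /= mxE.
Qed.

Lemma eq_divmod i j N : (0 < N)%N ->
  (i == j) = ((i %/ N == j %/ N) && (i %% N == j %% N))%N.
Proof.
move=> hN; apply/eqP/andP => [->|[/eqP a /eqP b]]; first by [].
by rewrite (divn_eq i N) (divn_eq j N) a b.
Qed.

Lemma fp_sq n i j : \sum_(0 <= k < 2 ^ n) mx_at (Fpow n) i k * mx_at (Fpow n) k j
  = ((i == j) && (i < 2 ^ n))%N%:R.
Proof.
elim: n i j => [|n IH] i j.
  rewrite big_nat1 !fp0.
  by case: i => [|i]; case: j => [|j]; rewrite /= ?expn0 ?mul1r ?mul0r ?mulr0 ?ltnS ?andbF.
have hN : (0 < 2 ^ n)%N by rewrite expn_gt0.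
rewrite (sum_split' _ 2 (2 ^ n) _ (expnS 2 n)).
transitivity ((\sum_(0 <= x < 2) mx_at Fker (i %/ 2 ^ n) x * mx_at Fker x (j %/ 2 ^ n)) *
   \sum_(0 <= y < 2 ^ n) (mx_at (Fpow n) (i %% 2 ^ n) y * mx_at (Fpow n) y (j %% 2 ^ n))).
  rewrite mulr_suml; apply: eq_bigr => x _; rewrite mulr_sumr.
  apply: eq_big_nat => y /andP [_ hy].
  rewrite !fpS divnMDl // modnMDl (divn_small hy) (modn_small hy) addn0.
  by rewrite mulrACA.
rewrite fk_sq IH -natrM mulnb (ltn_pmod i hN) andbT.
by rewrite (eq_divmod i j _ hN) divlt2 andbAC.
Qed.

Lemma fp_rs n i : \sum_(0 <= k < 2 ^ n) mx_at (Fpow n) i k = (i == 0)%N%:R.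
Proof.
elim: n i => [|n IH] i.
  by rewrite big_nat1 fp0 andbT.
have hN : (0 < 2 ^ n)%N by rewrite expn_gt0.
rewrite (sum_split' _ 2 (2 ^ n) _ (expnS 2 n)).
transitivity ((\sum_(0 <= x < 2) mx_at Fker (i %/ 2 ^ n) x) *
   \sum_(0 <= y < 2 ^ n) mx_at (Fpow n) (i %% 2 ^ n) y).
  rewrite mulr_suml; apply: eq_bigr => x _; rewrite mulr_sumr.
  apply: eq_big_nat => y /andP [_ hy].
  by rewrite !fpS divnMDl // modnMDl (divn_small hy) (modn_small hy) addn0.
rewrite fk_rs IH -natrM mulnb.
by rewrite (eq_divmod i 0 _ hN) div0n mod0n.
Qed.

Lemma Fpow_sq n : Fpow n *m Fpow n = 1%:M.
Proof.
apply/matrixP => i j; rewrite !mxE.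
transitivity (\sum_(k < 2 ^ n) mx_at (Fpow n) i k * mx_at (Fpow n) k j).
  by apply: eq_bigr => k _; rewrite !mx_atE.
by have := fp_sq n i j; rewrite big_mkord ltn_ord andbT => ->.
Qed.

Lemma rs_mx n (k : 'I_(2 ^ n)) : \sum_(j < 2 ^ n) Fpow n k j = (val k == 0)%N%:R.
Proof.
transitivity (\sum_(j < 2 ^ n) mx_at (Fpow n) k j).
  by apply: eq_bigr => j _; rewrite !mx_atE.
by have := fp_rs n k; rewrite big_mkord => ->.
Qed.

Lemma sum_mulF n (w : 'rV['F_2]_(2 ^ n)) :
  \sum_(j < 2 ^ n) (w *m Fpow n) 0 j = w 0 (idx0 n).
Proof.
under eq_bigr do rewrite mxE.
rewrite exchange_big /=.
under eq_bigr do rewrite -mulr_sumr rs_mx.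
rewrite (bigD1 (idx0 n)) //= mulr1 big1 ?addr0 // => k hk.
suff -> : (val k == 0)%N = false by rewrite mulr0.
by apply/negbTE; apply: contra hk => /eqP h; apply/eqP/val_inj.
Qed.

Lemma size_convT g v s : size (convTrans g v s).1 = size v.
Proof. by elim: v s => [|x v IH] s //=; rewrite IH. Qed.

Lemma nth_belast0 (x : 'F_2) s j : (j < size s)%N ->
  nth 0 (belast x s) j = nth 0 (x :: s) j.
Proof. by move=> h; rewrite [in RHS](lastI x s) nth_rcons size_belast h. Qed.

Lemma nth_convT g v s k : (k < size v)%N ->
  nth 0 (convTrans g v s).1 k = nth 0 g 0 * nth 0 v k +
    \sum_(i < size s) nth 0 g i.+1 *
      (if (i < k)%N then nth 0 v (k - i.+1) else nth 0 s (i - k)).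
Proof.
elim: v s k => [|x v IH] s [|k] //= hk.
  congr (_ + _); by apply: eq_bigr => i _; rewrite subn0.
rewrite IH // size_belast /=; congr (_ + _); apply: eq_bigr => i _.
have hi := ltn_ord i.
case: (ltngtP i k) => h.
- by rewrite ltnS (ltnW h) subSS -(subnSK h).
- rewrite ltnS leqNgt h /= nth_belast0; last by lia.
  by rewrite -(subnSK h).
- by rewrite -h ltnSn subnn nth_belast0 ?subnn //; lia.
Qed.

Definition vat N (v : 'rV['F_2]_N) t := nth 0 (rv2seq v) t.
Arguments vat {N}.

Lemma size_rv2seq N (v : 'rV['F_2]_N) : size (rv2seq v) = N.
Proof. by rewrite size_map size_enum_ord. Qed.

Lemma vatE N (v : 'rV['F_2]_N) (j : 'I_N) : vat v j = v 0 j.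
Proof. by rewrite /vat /rv2seq (nth_map j) ?size_enum_ord // nth_ord_enum. Qed.

Lemma vat_out N (v : 'rV['F_2]_N) t : (N <= t)%N -> vat v t = 0.
Proof. by move=> h; rewrite /vat nth_default // size_rv2seq. Qed.

Lemma vatB N (v w : 'rV['F_2]_N) t : vat (v - w) t = vat v t - vat w t.
Proof.
case: (ltnP t N) => h; last by rewrite !vat_out // subr0.
by rewrite -[t]/(val (Ordinal h)) !vatE !mxE.
Qed.

Lemma vat0 N t : vat (0 : 'rV['F_2]_N) t = 0.
Proof.
case: (ltnP t N) => h; last by rewrite !vat_out.
by rewrite -[t]/(val (Ordinal h)) !vatE mxE.
Qed.

Lemma convOutE N g s (v : 'rV['F_2]_N) (k : 'I_N) :
  convOut g s v 0 k = nth 0 g 0 * v 0 k +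
    \sum_(i < size s) nth 0 g i.+1 *
      (if (i < k)%N then vat v (k - i.+1) else nth 0 s (i - k)).
Proof. by rewrite /convOut mxE nth_convT ?size_rv2seq // -vatE. Qed.

Definition lin N g s (v : 'rV['F_2]_N) := convOut g s v - convOut g s 0.
Arguments lin {N}.

Lemma linE N g s (v : 'rV['F_2]_N) (k : 'I_N) : nth 0 g 0 = 1 ->
  lin g s v 0 k = v 0 k +
    \sum_(i < size s) nth 0 g i.+1 * (if (i < k)%N then vat v (k - i.+1) else 0).
Proof.
move=> hg; rewrite /lin mxE [X in _ + X]mxE !convOutE hg !mul1r.
rewrite (_ : (0 : 'rV['F_2]_N) 0 k = 0) ?add0r; last by rewrite mxE.
rewrite -addrA; congr (_ + _).
rewrite -sumrB; apply: eq_bigr => i _; rewrite vat0.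
by case: ifP => _; rewrite ?mulr0 ?subr0 ?subrr.
Qed.

Lemma mxBE N (A B : 'rV['F_2]_N) k : (A - B) 0 k = A 0 k - B 0 k.
Proof. by rewrite !mxE. Qed.

Lemma linB N g s (v w : 'rV['F_2]_N) : nth 0 g 0 = 1 ->
  lin g s (v - w) = lin g s v - lin g s w.
Proof.
move=> hg; apply/rowP => k; rewrite mxBE !linE // mxBE opprD addrACA -sumrB.
congr (_ + _); apply: eq_bigr => i _; rewrite vatB.
by case: ifP => _; rewrite ?mulrBr ?mulr0 ?subr0.
Qed.

Lemma lin_inj N g s : nth 0 g 0 = 1 -> injective (@lin N g s).
Proof.
move=> hg v w h.
have h0 : lin g s (v - w) = 0 by rewrite linB // h subrr.
have hz : forall t, vat (v - w) t = 0.
  elim/ltn_ind => t IH.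
  case: (ltnP t N) => ht; last by rewrite vat_out.
  have := congr1 (fun M : 'rV_N => M 0 (Ordinal ht)) h0.
  rewrite /= linE // big1 ?addr0 => [e|i _].
    by rewrite -[t]/(val (Ordinal ht)) vatE e mxE.
  case: ifP => /= hi; rewrite ?mulr0 // IH ?mulr0 //; lia.
apply/rowP => j; apply/eqP; rewrite -subr_eq0; apply/eqP.
by have := hz j; rewrite vatE mxBE.
Qed.

Lemma lin_idx0 n g s (v : 'rV['F_2]_(2 ^ n)) : nth 0 g 0 = 1 ->
  lin g s v 0 (idx0 n) = v 0 (idx0 n).
Proof. by move=> hg; rewrite linE // big1 ?addr0 // => i _; rewrite ltn0 mulr0. Qed.

Theorem mainTheorem4 (n m : nat) (g s : seq 'F_2) :
  (1 <= n)%N -> (1 <= m)%N -> size g = m.+1 -> nth 0 g 0 = 1 -> size s = m ->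
  let eta_c : 'rV['F_2]_(2 ^ n) := convOut g s 0 *m Fpow n in
  [set convOut g s v *m Fpow n | v in [set v : 'rV['F_2]_(2 ^ n) | v 0 (idx0 n) == 0]]
  = [set c + eta_c | c in [set c : 'rV['F_2]_(2 ^ n) | \sum_(j < 2 ^ n) c 0 j == 0]].
Proof.
move=> _ _ _ hg _ eta_c.
have hconv : forall v : 'rV['F_2]_(2 ^ n), convOut g s v = lin g s v + convOut g s 0.
  by move=> v; rewrite /lin subrK.
apply/setP => c; apply/imsetP/imsetP.
- case=> v; rewrite inE => hv ->.
  exists (lin g s v *m Fpow n).
  rewrite inE sum_mulF (lin_idx0 _ g s _ hg). exact: hv.
  rewrite /eta_c (hconv v); exact: mulmxDl.
- case=> c'; rewrite inE => hc ->.
  set w := c' *m Fpow n.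
  have hw : w *m Fpow n = c' by rewrite -mulmxA Fpow_sq mulmx1.
  have hw0 : w 0 (idx0 n) = 0 by rewrite -sum_mulF hw; apply/eqP.
  have [f' _ K] := injF_bij (@lin_inj (2 ^ n) g s hg).
  exists (f' w).
    have := lin_idx0 _ g s (f' w) hg; rewrite K => e; rewrite inE -e hw0; exact: eqxx.
  rewrite /eta_c (hconv (f' w)) K mulmxDl hw.
  reflexivity.
Qed.
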